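(* For any $\gamma>0$ and $\Delta>0$ there exists a performative prediction problem (a dimension $d$, a closed convex parameter set $\Theta\subseteq\mathbb{R}^d$, a distribution map $\mathcal{D}(\cdot)$ and a loss $\ell$) such that the loss is $\gamma$-strongly convex in $\theta$, there is a unique performatively stable point $\theta_{\mathrm{PS}}$, this point $\theta_{\mathrm{PS}}$ is a maximizer of the performative risk over $\Theta$, and $\mathrm{PR}(\theta_{\mathrm{PS}})-\min_{\theta\in\Theta}\mathrm{PR}(\theta)\geq \Delta$.
   Context: A performative prediction problem consists of a closed convex set $\Theta\subseteq\mathbb{R}^d$ of model parameters, a distribution map $\mathcal{D}(\cdot)$ assigning to each $\theta\in\Theta$ a probability distribution $\mathcal{D}(\theta)$ over $\mathbb{R}^m$, and a loss function $\ell(z;\theta)$. The performative risk is $\mathrm{PR}(\theta)=\mathbb{E}_{z\sim\mathcal{D}(\theta)}\ell(z;\theta)$. A point $\theta_{\mathrm{PS}}\in\Theta$ is performatively stable if $\theta_{\mathrm{PS}}\in\arg\min_{\theta\in\Theta}\mathbb{E}_{z\sim\mathcal{D}(\theta_{\mathrm{PS}})}\ell(z;\theta)$. The loss is $\gamma$-strongly convex in $\theta$ if for all $\theta,\theta',\theta_0\in\Theta$: $\mathbb{E}_{z\sim\mathcal{D}(\theta_0)}\ell(z;\theta)\geq \mathbb{E}_{z\sim\mathcal{D}(\theta_0)}\ell(z;\theta')+\mathbb{E}_{z\sim\mathcal{D}(\theta_0)}\nabla_\theta\ell(z;\theta')^\top(\theta-\theta')+\frac{\gamma}{2}\|\theta-\theta'\|_2^2$.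 *)

(* Defs.v *)
From HB Require Import structures.
From mathcomp Require Import all_boot all_order all_algebra.
From mathcomp Require Import all_classical all_reals all_analysis.
Set Implicit Arguments. Unset Strict Implicit. Unset Printing Implicit Defensive.
Import Order.TTheory GRing.Theory Num.Theory.
Import numFieldNormedType.Exports.
Local Open Scope classical_set_scope.
Local Open Scope ring_scope.

(* Parameters theta live in R^d = 'rV[R]_d (a normed module, so that the
   differential 'd is available); data z live in R^m = m.-tuple R, equipped
   with the product Borel sigma-algebra (generated by the coordinates). *)

Section Performative.
Context {R : realType} {d m : nat}.

Notation Z := (m.-tuple R).
Notation Par := 'rV[R]_d.

(* expectation E_{z ~ P} f z (real-valued; used only under integrability) *)
Definition expect (P : probability Z R) (f : Z -> R) : R :=
  Rintegral P setT f.

Definition sqnorm2 (v : Par) : R := \sum_(i < d) (v ord0 i) ^+ 2.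

(* E_{z ~ D(theta0)} grad_theta l(z; theta')^T (theta - theta'), written via
   the differential of theta |-> l(z; theta) at theta' applied to theta - theta'. *)
Definition exp_grad_dir (D : Par -> probability Z R) (ell : Z -> Par -> R)
  (theta0 theta' h : Par) : R :=
  expect (D theta0) (fun z => 'd (ell z) theta' h).

Definition well_posed (Theta : set Par) (D : Par -> probability Z R)
  (ell : Z -> Par -> R) : Prop :=
  (forall z theta, differentiable (ell z) theta) /\
  (forall theta0 theta, Theta theta0 -> Theta theta ->
     (D theta0).-integrable setT (fun z => (ell z theta)%:E)) /\
  (forall theta0 theta theta', Theta theta0 -> Theta theta -> Theta theta' ->
     (D theta0).-integrable setT
       (fun z => ('d (ell z) theta' (theta - theta'))%:E)).

Definition strongly_convex (gamma : R) (Theta : set Par)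
  (D : Par -> probability Z R) (ell : Z -> Par -> R) : Prop :=
  forall theta theta' theta0, Theta theta -> Theta theta' -> Theta theta0 ->
    expect (D theta0) (fun z => ell z theta) >=
      expect (D theta0) (fun z => ell z theta')
      + exp_grad_dir D ell theta0 theta' (theta - theta')
      + gamma / 2 * sqnorm2 (theta - theta').

Definition PR (D : Par -> probability Z R) (ell : Z -> Par -> R) (theta : Par) : R :=
  expect (D theta) (fun z => ell z theta).

Definition perf_stable (Theta : set Par) (D : Par -> probability Z R)
  (ell : Z -> Par -> R) (thetaPS : Par) : Prop :=
  Theta thetaPS /\
  forall theta, Theta theta ->
    expect (D thetaPS) (fun z => ell z thetaPS)
      <= expect (D thetaPS) (fun z => ell z theta).

End Performative.

(* Main.v *)
Require Import Defs.
From HB Require Import structures.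
From mathcomp Require Import all_boot all_order all_algebra.
From mathcomp Require Import all_classical all_reals all_analysis.
From mathcomp Require Import measurable_realfun.
From mathcomp Require Import ring lra.
Import Order.TTheory GRing.Theory Num.Theory.
Import numFieldNormedType.Exports.
Local Open Scope classical_set_scope.
Local Open Scope ring_scope.

Section H.
Context {R : realType}.

Definition cc (t : 'rV[R]_1) : R := t ord0 ord0.
Definition z0 (z : 1.-tuple R) : R := tnth z ord0.
Definition Dd (w : R) : probability (1.-tuple R) R := \d_([tuple w]).

Lemma mz (g : R -> R) : measurable_fun setT g ->
  measurable_fun setT (fun z : 1.-tuple R => g (z0 z)).
Proof.
move=> mg; apply: (measurableT_comp mg); exact: measurable_tnth.
Qed.

Lemma expect_D (g : R -> R) w : measurable_fun setT g ->
  expect (Dd w) (fun z => g (z0 z)) = g w.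
Proof.
move=> mg; rewrite /expect /Rintegral /Dd integral_dirac//=.
  by rewrite indicT /= mul1r.
by apply: measurableT_comp => //; exact: mz.
Qed.

Lemma integ_D (g : R -> R) w : measurable_fun setT g ->
  (Dd w).-integrable setT (fun z => (g (z0 z))%:E).
Proof.
move=> mg; apply/integrableP; split; first by apply: measurableT_comp => //; exact: mz.
rewrite /Dd integral_dirac//=.
  by rewrite diracT mul1e ltry.
apply: measurableT_comp => //; apply: measurableT_comp => //; exact: mz.
Qed.

Lemma cc_lin : linear cc.
Proof. by move=> k x y; rewrite /cc !mxE. Qed.

HB.instance Definition _ := GRing.isLinear.Build R _ _ _ cc cc_lin.

Lemma cc_cont : continuous cc.
Proof. exact: coord_continuous. Qed.

Lemma d_cc t : 'd cc t = cc :> ('rV[R]_1 -> R).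
Proof. exact: diff_lin cc_cont. Qed.

Lemma diff_cc t : differentiable cc t.
Proof. exact: linear_differentiable cc_cont. Qed.

Definition ellf (a : R) (z : 1.-tuple R) (t : 'rV[R]_1) : R :=
  (a * (cc t - z0 z)) * (cc t - z0 z).

Lemma ellf_diff a z t : differentiable (ellf a z) t /\
  'd (ellf a z) t = (fun h => 2 * a * (cc t - z0 z) * cc h) :> (_ -> R).
Proof.
pose g := (cc : 'rV[R]_1 -> R) - cst (z0 z).
have dg : differentiable g t.
  by apply: differentiableB; [exact: diff_cc|exact: differentiable_cst].
have ddg : 'd g t = cc :> (_ -> R).
  rewrite diffB; [|exact: diff_cc|exact: differentiable_cst].
  by rewrite d_cc diff_cst; apply/funext => h /=; rewrite subr0.
have -> : ellf a z = (a *: g) * g.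
  by apply/funext => x; rewrite /ellf /g /=.
split; first by apply: differentiableM => //; exact: differentiableZ.
rewrite diffM//; last exact: differentiableZ.
rewrite diffZ// ddg; apply/funext => h /=.
rewrite /g /= !fctE /= /GRing.scale /=.
ring.
Qed.

Lemma mq k x : measurable_fun setT (fun u : R => (k * (x - u)) * (x - u)).
Proof.
apply: measurable_funM; last by apply: measurable_funB.
by apply: measurable_funM => //; apply: measurable_funB.
Qed.

Lemma ml k x c : measurable_fun setT (fun u : R => k * (x - u) * c).
Proof.
apply: measurable_funM => //.
by apply: measurable_funM => //; apply: measurable_funB.
Qed.

Lemma expect_ell a w t :
  expect (Dd w) (fun z => ellf a z t) = (a * (cc t - w)) * (cc t - w).
Proof. exact: (expect_D (fun u => (a * (cc t - u)) * (cc t - u)) w (mq a (cc t))). Qed.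

Lemma expect_grad a w t h :
  expect (Dd w) (fun z => 'd (ellf a z) t h) = 2 * a * (cc t - w) * cc h.
Proof.
have -> : (fun z => 'd (ellf a z) t h) = (fun z => 2 * a * (cc t - z0 z) * cc h).
  by apply/funext => z; rewrite (ellf_diff a z t).2.
exact: (expect_D (fun u => 2 * a * (cc t - u) * cc h) w (ml (2 * a) (cc t) (cc h))).
Qed.

Lemma integ_ell a w t : (Dd w).-integrable setT (fun z => (ellf a z t)%:E).
Proof. exact: (integ_D (fun u => (a * (cc t - u)) * (cc t - u)) w (mq a (cc t))). Qed.

Lemma integ_grad a w t h :
  (Dd w).-integrable setT (fun z => ('d (ellf a z) t h)%:E).
Proof.
have -> : (fun z => ('d (ellf a z) t h)%:E) =
          (fun z => (2 * a * (cc t - z0 z) * cc h)%:E).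
  by apply/funext => z; rewrite (ellf_diff a z t).2.
exact: (integ_D (fun u => 2 * a * (cc t - u) * cc h) w (ml (2 * a) (cc t) (cc h))).
Qed.

End H.

Lemma sqmono {R : realType} (a u v : R) : 0 <= a -> 0 <= u -> u <= v ->
  a * u * u <= a * v * v.
Proof.
move=> a0 u0 uv; rewrite -!mulrA ler_wpM2l//.
by apply: ler_pM.
Qed.

Lemma sqmono_lt {R : realType} (a u v : R) : 0 < a -> 0 <= u -> u < v ->
  a * u * u < a * v * v.
Proof.
move=> a0 u0 uv; rewrite -!mulrA ltr_pM2l//.
by apply: ltr_pM.
Qed.

Theorem proposition2p1 (R : realType) (gamma Delta : R) :
  0 < gamma -> 0 < Delta ->
  exists (d m : nat) (Theta : set 'rV[R]_d)
         (D : 'rV[R]_d -> probability (m.-tuple R) R)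
         (ell : m.-tuple R -> 'rV[R]_d -> R),
    [/\ (0 < d)%N /\ (0 < m)%N, closed Theta, convex_set Theta,
        well_posed Theta D ell /\ strongly_convex gamma Theta D ell &
        exists thetaPS : 'rV[R]_d,
          [/\ perf_stable Theta D ell thetaPS,
              (forall theta, perf_stable Theta D ell theta -> theta = thetaPS),
              (forall theta, Theta theta -> PR D ell theta <= PR D ell thetaPS) &
              exists thetaMin : 'rV[R]_d,
                [/\ Theta thetaMin,
                    (forall theta, Theta theta -> PR D ell thetaMin <= PR D ell theta) &
                    PR D ell thetaPS - PR D ell thetaMin >= Delta]]].
Proof.
move=> g0 D0.
pose a := gamma / 2.
have a0 : 0 < a by rewrite /a divr_gt0.
pose M := 1 + Delta / a.
have e0 : 0 < Delta / a by rewrite divr_gt0.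
have ae : a * (Delta / a) = Delta by rewrite mulrC divfK// gt_eqF.
have M1 : 1 <= M by rewrite /M lerDl ltW.
pose zf (t : 'rV[R]_1) := if cc t == 0 then - M else cc t - 1.
pose Th := [set t : 'rV[R]_1 | 0 <= cc t] `&` [set t | cc t <= 1].
exists 1%N, 1%N, Th, (fun t => Dd (zf t)), (ellf a).
have Th0 : Th 0 by rewrite /Th /cc /= mxE; split => //.
have cc0 : cc (0 : 'rV[R]_1) = 0 by rewrite /cc mxE.
have PRE t : PR (fun t => Dd (zf t)) (ellf a) t = (a * (cc t - zf t)) * (cc t - zf t).
  by rewrite /PR expect_ell.
split.
- by [].
- apply: closedI.
  + apply: (@preimage_closed _ _ cc [set x : R | 0 <= x]); last exact: closed_ge.
    by move=> x _; exact: cc_cont.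
  + apply: (@preimage_closed _ _ cc [set x : R | x <= 1]); last exact: closed_le.
    by move=> x _; exact: cc_cont.
- move=> x y l; rewrite !in_setE => -[x0 x1] [y0 y1].
  rewrite /Th /=.
  have -> : cc (conv l x y) = l%:num * cc x + (1 - l%:num) * cc y by rewrite /cc !mxE.
  have l0 : 0 <= l%:num by [].
  have l1 : l%:num <= 1 by [].
  have l1' : 0 <= 1 - l%:num by rewrite subr_ge0.
  have h1 := mulr_ge0 l0 x0. have h2 := mulr_ge0 l1' y0.
  have h3 : l%:num * cc x <= l%:num * 1 by rewrite ler_wpM2l.
  have h4 : (1 - l%:num) * cc y <= (1 - l%:num) * 1 by rewrite ler_wpM2l.
  split; lra.
- split.
  + split; first by move=> z t; exact: (ellf_diff a z t).1.
    split; first by move=> *; exact: integ_ell.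
    by move=> *; exact: integ_grad.
  + move=> t t' t0 _ _ _.
    rewrite /exp_grad_dir !expect_ell expect_grad.
    have -> : sqnorm2 (t - t') = (cc t - cc t') ^+ 2 by rewrite /sqnorm2 big_ord1 /cc !mxE.
    have -> : cc (t - t') = cc t - cc t' by rewrite /cc !mxE.
    rewrite -/a le_eqVlt; apply/orP; left; apply/eqP; ring.
exists 0; split.
- split => // t; rewrite /Th /= => -[t0 t1]; have {t0}t0 : 0 <= cc t := t0; have {t1}t1 : cc t <= 1 := t1; rewrite !expect_ell /zf cc0 eqxx.
  by apply: sqmono; [exact: ltW|lra|lra].
- move=> t; rewrite /Th /= => -[[t0 t1] PS]; have {t0}t0 : 0 <= cc t := t0; have {t1}t1 : cc t <= 1 := t1; have := PS 0 Th0; rewrite !expect_ell cc0 /zf.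
  case: eqP => [ct0 _|ct0].
    by apply/matrixP => i j; rewrite !ord1 mxE -ct0.
  have ctp : 0 < cc t by rewrite lt_neqAle t0 andbT eq_sym; apply/eqP.
  have -> : cc t - (cc t - 1) = 1 by ring.
  have -> : 0 - (cc t - 1) = 1 - cc t by ring.
  move=> h; have : a * (1 - cc t) * (1 - cc t) < a * 1 * 1.
    by apply: sqmono_lt; [exact: a0|lra|lra].
  move=> h2; exfalso; lra.
- move=> t; rewrite /Th /= => -[t0 t1]; have {t0}t0 : 0 <= cc t := t0; have {t1}t1 : cc t <= 1 := t1; rewrite !PRE /zf cc0 eqxx.
  case: eqP => [->|_]; first by [].
  have -> : cc t - (cc t - 1) = 1 by ring.
  by apply: sqmono; [exact: ltW|lra|lra].
exists (const_mx 1); have c1 : cc (const_mx 1 : 'rV[R]_1) = 1 by rewrite /cc mxE.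
split.
- by rewrite /Th /= c1; split.
- move=> t; rewrite /Th /= => -[t0 t1]; have {t0}t0 : 0 <= cc t := t0; have {t1}t1 : cc t <= 1 := t1; rewrite !PRE /zf c1 oner_eq0.
  have -> : 1 - (1 - 1) = 1 :> R by ring.
  case: eqP => [->|_].
    by apply: sqmono; [exact: ltW|lra|lra].
  by have -> : cc t - (cc t - 1) = 1 by ring.
- rewrite !PRE /zf c1 cc0 oner_eq0 eqxx.
  have -> : a * (0 - - M) * (0 - - M) - a * (1 - (1 - 1)) * (1 - (1 - 1)) =
    2 * (a * (Delta / a)) + a * (Delta / a) * (Delta / a) by rewrite /M; ring.
  have h : 0 <= a * (Delta / a) * (Delta / a).
    by apply: mulr_ge0; [apply: mulr_ge0|]; apply: ltW.
  rewrite ae in h *; lra.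
Qed.
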